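(* Let $n\ge3$, $\boldsymbol\ell$ positive lengths, and $\xi$, $N>0$ smooth functions on $T^n$ depending only on $s^1$ with $\int_{T^n}\xi N\,dV_{\boldsymbol\ell}=0$; let $\mu,\tau^*\in\mathbb{R}$. Suppose either (a) $\mu,\tau^*$ are nonzero with the same sign and $c=(\mu/\tau^* )^{1/q}$, or (b) $\mu=\tau^*=0$ and $c>0$ is arbitrary. Let $r=c^{(q-2)/2}$, $\bar\tau=\tau^*+c^{-2q}\xi$, and let $(\bar g,\bar K)=(g_{r\boldsymbol\ell},\ \bar\tau(r\ell_1)^2(ds^1)^2)$ be the solution of the constraint equations generated (via the CTS-H$^*$ method with $\phi\equiv c$) by the data $(g_{\boldsymbol\ell},\mu\sigma^\flat_{\boldsymbol\ell},\tau^*,\xi,N)$. Let $$\tau^\circ=\frac{\int_{T^n}\bar\tau\,dV_{\bar g}}{\int_{T^n}1\,dV_{\bar g}},\qquad \hat{\boldsymbol\ell}=(r\ell_2,\ldots,r\ell_n).$$ If $\tau^\circ\neq0$, then $\bar g,\bar K$ are the induced metric and second fundamental form of a simple product embedding into the flat Kasner spacetime $\mathcal K_\Psi\times T^{n-1}_{\hat{\boldsymbol\ell}}$ with $\Psi=(r\ell_1)\tau^\circ$. If $\tau^\circ=0$, then $\bar g,\bar K$ are induced by a simple product embedding into a static toroidal spacetime $\mathcal C_L\times T^{n-1}_{\hat{\boldsymbol\ell}}$ for some $L>0$.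
   Context: $q=\frac{2n}{n-2}$, $\kappa=\frac{n-1}{n}$. $T^n=(\mathbb{R}/\mathbb{Z})^n$, unit coordinates $(s^1,\ldots,s^n)$; $g_{\boldsymbol\ell}=\sum_k\ell_k^2(ds^k)^2$, volume form $dV_{\boldsymbol\ell}$; $T^m_{\hat{\boldsymbol\ell}}$ is $T^m$ with $g_{\hat{\boldsymbol\ell}}$; $\sigma^\flat_{\boldsymbol\ell}=\kappa\ell_1^2(ds^1)^2-\frac1n\sum_{k\ge2}\ell_k^2(ds^k)^2$. CTS-H$^*$ method: for data $(g,\sigma,\tau^*,\xi,N)$ a solution is $(\phi>0,W)$ such that $\bar g=\phi^{q-2}g$, $\bar K=\phi^{-2}(\sigma+\frac1{2N}(L_Wg-\frac2n(\mathrm{div}W)g))+\frac{\tau^*+\phi^{-2q}\xi}{n}\bar g$ solves the Einstein constraint equations. $\mathbb{R}^{1,1}$: coordinates $(t,x)$, metric $-dt^2+dx^2$, time-oriented by $\partial_t$, $I_\pm=\{\pm t>|x|\}$; $B_\Psi$ the linear boost with matrix $\begin{pmatrix}\cosh\Psi&\sinh\Psi\\\sinh\Psi&\cosh\Psi\end{pmatrix}$; $\mathcal K_\Psi=I_+/\langle B_\Psi\rangle$ ($\Psi>0$) or $I_-/\langle B_\Psi\rangle$ ($\Psi<0$); $\mathcal C_L=\mathbb{R}^{1,1}/\langle(t,x)\mapsto(t,x+L)\rangle$. Products carry product Lorentzian metrics. A simple product embedding is $\iota(s^1,\ldots,s^n)=(\gamma(s^1),(s^2,\ldots,s^n))$ for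 a curve $\gamma$ in the 2-dimensional factor. Second fundamental form: $K(X,Y)=-\langle n,\nabla_XY\rangle$, $n$ the future unit normal. *)

(* Defs.v *)
From Stdlib Require Import Reals Lra ZArith.
From Coquelicot Require Import Coquelicot.
Open Scope R_scope.

(* Points of R^m (lifts of points of tori / of the universal cover of the
   ambient spacetime) are represented as functions nat -> R; only the
   first few coordinates are relevant. *)
Definition vec := nat -> R.

Fixpoint sumR (f : nat -> R) (m : nat) : R :=
  match m with O => 0 | S m' => sumR f m' + f m' end.
Fixpoint prodR (f : nat -> R) (m : nat) : R :=
  match m with O => 1 | S m' => prodR f m' * f m' end.

Definition upd (s : vec) (i : nat) (t : R) : vec :=
  fun k => if Nat.eqb k i then t else s k.

Definition smooth1 (f : R -> R) : Prop := forall k x, ex_derive_n f k x.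
Definition periodic1 (f : R -> R) : Prop := forall x, f (x + 1) = f x.

(* ---------- Torus T^n = (R/Z)^n, unit coordinates s^1..s^n  ------------
   s^{k+1} is stored at index k (so s^1 is  s 0).                         *)

Fixpoint iint (k : nat) (f : vec -> R) (s : vec) : R :=
  match k with
  | O => f s
  | S k' => RInt (fun t => iint k' f (upd s k' t)) 0 1
  end.

(* integral over T^n of f with respect to dV_l, where g_l = sum_k l_k^2 (ds^k)^2,
   so dV_l = (l_1 ... l_n) ds^1 ... ds^n  (l_{k+1} stored at  l k) *)
Definition torus_integral (n : nat) (l : nat -> R) (f : vec -> R) : R :=
  iint n (fun s => f s * prodR l n) (fun _ => 0).

Definition g_torus (l : nat -> R) (i j : nat) : R :=
  if Nat.eqb i j then (l i) ^ 2 else 0.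

Definition q_exp (n : nat) : R := 2 * INR n / (INR n - 2).

(* ---------- 2-dimensional Minkowski space R^{1,1} ----------
   points (t,x); metric -dt^2 + dx^2; time orientation d/dt *)
Definition boost (psi : R) (p : R * R) : R * R :=
  (cosh psi * fst p + sinh psi * snd p, sinh psi * fst p + cosh psi * snd p).
Definition translx (L : R) (p : R * R) : R * R := (fst p, snd p + L).

Definition in_Iplus (p : R * R) : Prop := fst p > Rabs (snd p).
Definition in_Iminus (p : R * R) : Prop := - fst p > Rabs (snd p).

Definition smooth_curve (g : R -> R * R) : Prop :=
  smooth1 (fun s => fst (g s)) /\ smooth1 (fun s => snd (g s)).

(* A closed embedded smooth curve  gamma : R/Z -> K_Psi, given by its lift
   g : R -> I_(+/-) to the covering I_(+/-) of K_Psi = I_(+/-)/<B_Psi>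
   (B_Psi^k = boost (k Psi)): the lift lies in I_+ (Psi>0) or I_- (Psi<0),
   closes up modulo the deck group, and the induced map R/Z -> K_Psi is
   injective. *)
Definition kasner_closed_embedded_curve (Psi : R) (g : R -> R * R) : Prop :=
  smooth_curve g /\
  (forall s, (0 < Psi /\ in_Iplus (g s)) \/ (Psi < 0 /\ in_Iminus (g s))) /\
  (exists m : Z, forall s, g (s + 1) = boost (IZR m * Psi) (g s)) /\
  (forall s s' (k : Z), g s = boost (IZR k * Psi) (g s') ->
      exists j : Z, s = s' + IZR j).

(* Same for C_L = R^{1,1} / <(t,x) |-> (t, x+L)> *)
Definition cyl_closed_embedded_curve (L : R) (g : R -> R * R) : Prop :=
  smooth_curve g /\
  (exists m : Z, forall s, g (s + 1) = translx (IZR m * L) (g s)) /\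
  (forall s s' (k : Z), g s = translx (IZR k * L) (g s') ->
      exists j : Z, s = s' + IZR j).

(* ---------- the product spacetime  S x T^{n-1}_{lhat} ----------
   On the universal cover, coordinates: index 0 = t, 1 = x,
   index 2+j = unit coordinate y^{j} of T^{n-1} (j = 0..n-2).
   The product metric is  -dt^2 + dx^2 + sum_j lhat_j^2 (dy^j)^2,
   which is constant in these coordinates (flat, Levi-Civita connection
   = coordinate derivatives). *)
Definition prod_metric (n : nat) (lhat : nat -> R) (u v : vec) : R :=
  - u 0%nat * v 0%nat + u 1%nat * v 1%nat
  + sumR (fun j => (lhat j) ^ 2 * u (2 + j)%nat * v (2 + j)%nat) (n - 1).

Definition simple_product_embedding (g : R -> R * R) : vec -> vec :=
  fun s a => match a with
             | O => fst (g (s 0%nat))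
             | S O => snd (g (s 0%nat))
             | S (S j) => s (S j)
             end.

Definition pderiv (F : vec -> vec) (i : nat) (s : vec) : vec :=
  fun a => Derive (fun t => F (upd s i t) a) (s i).

Definition induced_metric (n : nat) (lhat : nat -> R) (F : vec -> vec)
  (i j : nat) (s : vec) : R :=
  prod_metric n lhat (pderiv F i s) (pderiv F j s).

Definition future_unit_normal (n : nat) (lhat : nat -> R) (F : vec -> vec)
  (s : vec) (nu : vec) : Prop :=
  prod_metric n lhat nu nu = -1 /\ 0 < nu 0%nat /\
  (forall i, (i < n)%nat -> prod_metric n lhat nu (pderiv F i s) = 0).

Definition second_fundamental_form (n : nat) (lhat : nat -> R) (F : vec -> vec)
  (nu : vec) (i j : nat) (s : vec) : R :=
  - prod_metric n lhat nu (pderiv (pderiv F j) i s).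

Definition induces (n : nat) (lhat : nat -> R) (F : vec -> vec)
  (gbar Kbar : nat -> nat -> vec -> R) : Prop :=
  forall s : vec,
    (forall i j, (i < n)%nat -> (j < n)%nat ->
        induced_metric n lhat F i j s = gbar i j s) /\
    exists nu, future_unit_normal n lhat F s nu /\
      (forall i j, (i < n)%nat -> (j < n)%nat ->
        second_fundamental_form n lhat F nu i j s = Kbar i j s).

(* Main.v *)
Require Import Defs.
From Stdlib Require Import Reals ZArith Lra Lia List.
From Coquelicot Require Import Coquelicot.
Open Scope R_scope.

Lemma isd_val (f : R -> R) (x a b : R) : is_derive f x a -> a = b -> is_derive f x b.
Proof. intros H ->; exact H. Qed.
Lemma isd_plus (f g : R -> R) (x a b : R) : is_derive f x a -> is_derive g x b ->
  is_derive (fun y => f y + g y) x (a + b).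
Proof. intros H1 H2. exact (is_derive_plus f g x a b H1 H2). Qed.
Lemma isd_mult (f g : R -> R) (x a b : R) : is_derive f x a -> is_derive g x b ->
  is_derive (fun y => f y * g y) x (a * g x + f x * b).
Proof. intros H1 H2. exact (is_derive_mult f g x a b H1 H2 Rmult_comm). Qed.
Lemma isd_const (c x : R) : is_derive (fun _ => c) x 0.
Proof. exact (is_derive_const c x). Qed.
Lemma isd_id (x : R) : is_derive (fun t => t) x 1.
Proof. exact (is_derive_id x). Qed.
Lemma isd_scal (f : R -> R) (x c a : R) : is_derive f x a -> is_derive (fun y => c * f y) x (c * a).
Proof. apply is_derive_scal. Qed.
Lemma isd_exp_comp (f : R -> R) (x a : R) : is_derive f x a ->
  is_derive (fun y => exp (f y)) x (a * exp (f x)).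
Proof. intros H. exact (is_derive_comp exp f x (exp (f x)) a (is_derive_exp (f x)) H). Qed.

Definition sm (f : R -> R) := exists D : nat -> R -> R,
  (forall x, D 0%nat x = f x) /\ (forall k x, is_derive (D k) x (D (S k) x)).

Lemma sm_smooth1 f : sm f -> smooth1 f.
Proof.
  intros [D [H0 HD]].
  assert (E : forall k x, Derive_n f k x = D k x).
  { induction k; intros x; simpl. now rewrite H0.
    rewrite (Derive_ext (Derive_n f k) (D k) x IHk). now apply is_derive_unique. }
  intros k x; destruct k; simpl; auto.
  apply ex_derive_ext with (D k). intros; now rewrite E.
  eexists; apply HD.
Qed.

Lemma smooth1_sm f : smooth1 f -> sm f.
Proof. intros H. exists (Derive_n f). split. reflexivity.
  intros k x. apply Derive_correct. exact (H (S k) x). Qed.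

Lemma sm_ext f g : (forall x, f x = g x) -> sm f -> sm g.
Proof.
  intros E [D [H0 HD]].
  exists (fun k => match k with O => g | S _ => D k end). split. reflexivity.
  intros [|k] x. apply is_derive_ext with (D 0%nat). intros; now rewrite H0.
  apply HD. apply HD.
Qed.

Lemma sm_der f : sm f -> exists f', sm f' /\ forall x, is_derive f x (f' x).
Proof.
  intros [D [H0 HD]]. exists (D 1%nat). split.
  exists (fun k => D (S k)). split. reflexivity. intros; apply HD.
  intros x. apply is_derive_ext with (D 0%nat). intros; now rewrite H0. apply HD.
Qed.

Lemma sm_isd (f : R -> R) (x : R) : sm f -> is_derive f x (Derive f x).
Proof. intros H. destruct (sm_der f H) as [f' [_ H']].
  apply Derive_correct. eexists; apply H'. Qed.

Lemma sm_Derive f : sm f -> sm (Derive f).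
Proof. intros H. destruct (sm_der f H) as [f' [Hs H']].
  apply sm_ext with f'. intros x; symmetry; now apply is_derive_unique. exact Hs. Qed.

Lemma sm_antider f g : sm g -> (forall x, is_derive f x (g x)) -> sm f.
Proof.
  intros [D [H0 HD]] Hf.
  exists (fun k => match k with O => f | S k' => D k' end). split. reflexivity.
  intros [|k] x. simpl. rewrite H0. apply Hf. apply HD.
Qed.

Lemma sm_const c : sm (fun _ => c).
Proof.
  exists (fun k => match k with O => fun _ => c | S _ => fun _ => 0 end). split. reflexivity.
  intros [|k] x; apply isd_const.
Qed.

Lemma sm_plus f g : sm f -> sm g -> sm (fun x => f x + g x).
Proof.
  intros [D [H0 HD]] [E [E0 HE]].
  exists (fun k x => D k x + E k x). split. intros; now rewrite H0, E0.
  intros k x. apply isd_plus; auto.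
Qed.

Lemma sm_scal c f : sm f -> sm (fun x => c * f x).
Proof.
  intros [D [H0 HD]].
  exists (fun k x => c * D k x). split. intros; now rewrite H0.
  intros k x. apply isd_scal; auto.
Qed.

Fixpoint evL (D E : nat -> R -> R) (L : list (nat * nat)) (x : R) : R :=
  match L with nil => 0 | (i, j) :: L' => D i x * E j x + evL D E L' x end.
Definition stepL (L : list (nat * nat)) : list (nat * nat) :=
  flat_map (fun p => (S (fst p), snd p) :: (fst p, S (snd p)) :: nil) L.

Lemma evL_der D E : (forall k x, is_derive (D k) x (D (S k) x)) ->
  (forall k x, is_derive (E k) x (E (S k) x)) ->
  forall L x, is_derive (evL D E L) x (evL D E (stepL L) x).
Proof.
  intros HD HE. induction L as [|[i j] L IH]; intros x; simpl.
  apply isd_const.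
  eapply isd_val. apply isd_plus. apply isd_mult. apply HD. apply HE. apply IH.
  simpl. fold (stepL L). ring.
Qed.

Lemma sm_mult f g : sm f -> sm g -> sm (fun x => f x * g x).
Proof.
  intros [D [H0 HD]] [E [E0 HE]].
  exists (fun k => evL D E (Nat.iter k stepL ((0%nat,0%nat)::nil))). split.
  intros; simpl; rewrite H0, E0; ring.
  intros k x. simpl. apply evL_der; auto.
Qed.

Fixpoint Pk (b : R -> R) (k : nat) : R -> R :=
  match k with O => fun _ => 1 | S k' => fun x => Derive (Pk b k') x + b x * Pk b k' x end.

Lemma sm_ode h b : sm b -> (forall x, is_derive h x (b x * h x)) -> sm h.
Proof.
  intros Hb Hh.
  assert (HP : forall k, sm (Pk b k)).
  { induction k; simpl. apply sm_const. apply sm_plus. now apply sm_Derive. now apply sm_mult. }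
  exists (fun k x => Pk b k x * h x). split. intros; simpl; ring.
  intros k x. simpl. eapply isd_val. apply isd_mult. apply sm_isd, HP. apply Hh. ring.
Qed.

Lemma sm_cont (f : R -> R) (x : R) : sm f -> continuous f x.
Proof. intros H. apply (@ex_derive_continuous R_AbsRing R_NormedModule f x). eexists; apply (sm_isd f x H). Qed.

Lemma exRI (f : R -> R) a b : sm f -> ex_RInt f a b.
Proof. intros H. apply (@ex_RInt_continuous R_CompleteNormedModule). intros; now apply sm_cont. Qed.

Lemma antider (f : R -> R) (a x : R) : sm f -> is_derive (fun s => RInt f a s) x (f x).
Proof.
  intros H. apply (is_derive_RInt f (RInt f a) a x).
  apply filter_forall. intros y. apply (@RInt_correct R_CompleteNormedModule). now apply exRI.
  now apply sm_cont.
Qed.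

Lemma isd_cont (h : R -> R) x d : is_derive h x d -> continuity_pt h x.
Proof. intros H. apply continuity_pt_filterlim.
  apply (@ex_derive_continuous R_AbsRing R_NormedModule h x). eexists; exact H. Qed.

Lemma const_of_zero (h : R -> R) : (forall x, is_derive h x 0) -> forall a b, h a = h b.
Proof.
  intros H a b. destruct (MVT_gen h a b (fun _ => 0)) as [c [_ Hc]].
  intros; apply H. intros; eapply isd_cont; apply H. lra.
Qed.

Lemma strict_incr (h d : R -> R) : (forall x, is_derive h x (d x)) -> (forall x, 0 < d x) ->
  forall a b, a < b -> h a < h b.
Proof.
  intros H Hd a b Hab. destruct (MVT_gen h a b d) as [c [_ Hc]].
  intros; apply H. intros; eapply isd_cont; apply H.
  assert (0 < d c * (b - a)) by (apply Rmult_lt_0_compat; [apply Hd|lra]). lra.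
Qed.

Lemma incr_inj (h : R -> R) : (forall a b, a < b -> h a < h b) -> forall a b, h a = h b -> a = b.
Proof.
  intros H a b E. destruct (Rtotal_order a b) as [L|[L|L]]; auto.
  apply H in L; lra. apply H in L; lra.
Qed.

Lemma iter_mult (h : R -> R) (P : R) : (forall s, h (s + 1) = exp P * h s) ->
  forall (k : Z) s, h (s + IZR k) = exp (IZR k * P) * h s.
Proof.
  intros H.
  assert (Hn : forall m : nat, forall s, h (s + INR m) = exp (INR m * P) * h s).
  { induction m; intros s. simpl. rewrite Rplus_0_r, Rmult_0_l, exp_0; ring.
    rewrite S_INR. replace (s + (INR m + 1)) with ((s + INR m) + 1) by ring.
    rewrite H, IHm. replace ((INR m + 1) * P) with (INR m * P + P) by ring.
    rewrite exp_plus; ring. }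
  intros k s. destruct k as [|p|p].
  simpl. rewrite Rplus_0_r, Rmult_0_l, exp_0; ring.
  rewrite <- positive_nat_Z, <- INR_IZR_INZ. apply Hn.
  rewrite <- Pos2Z.opp_pos, <- positive_nat_Z, opp_IZR, <- INR_IZR_INZ.
  set (m := Pos.to_nat p).
  pose proof (Hn m (s + - INR m)) as E.
  replace (s + - INR m + INR m) with s in E by ring.
  rewrite E, <- Rmult_assoc, <- exp_plus.
  replace (- INR m * P + INR m * P) with 0 by ring. rewrite exp_0; ring.
Qed.

Lemma iter_add (h : R -> R) (L : R) : (forall s, h (s + 1) = h s + L) ->
  forall (k : Z) s, h (s + IZR k) = h s + IZR k * L.
Proof.
  intros H.
  assert (Hn : forall m : nat, forall s, h (s + INR m) = h s + INR m * L).
  { induction m; intros s. simpl. rewrite Rplus_0_r; ring.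
    rewrite S_INR. replace (s + (INR m + 1)) with ((s + INR m) + 1) by ring.
    rewrite H, IHm. ring. }
  intros k s. destruct k as [|p|p].
  simpl. rewrite Rplus_0_r; ring.
  rewrite <- positive_nat_Z, <- INR_IZR_INZ. apply Hn.
  rewrite <- Pos2Z.opp_pos, <- positive_nat_Z, opp_IZR, <- INR_IZR_INZ.
  set (m := Pos.to_nat p).
  pose proof (Hn m (s + - INR m)) as E.
  replace (s + - INR m + INR m) with s in E by ring. lra.
Qed.

Lemma isd_minus (f g : R -> R) (x a b : R) : is_derive f x a -> is_derive g x b ->
  is_derive (fun y => f y - g y) x (a - b).
Proof. intros H1 H2. exact (is_derive_minus f g x a b H1 H2). Qed.
Lemma isd_comp (f g : R -> R) (x a b : R) : is_derive f (g x) a -> is_derive g x b ->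
  is_derive (fun y => f (g y)) x (b * a).
Proof. intros H1 H2. exact (is_derive_comp f g x a b H1 H2). Qed.

Lemma theta_shift (tb : R -> R) (a th0 : R) : sm tb -> periodic1 tb ->
  forall s, th0 + a * RInt tb 0 (s + 1) = (th0 + a * RInt tb 0 s) + a * RInt tb 0 1.
Proof.
  intros Hs Hp s.
  set (h := fun s => th0 + a * RInt tb 0 (s + 1) - (th0 + a * RInt tb 0 s)).
  assert (E : h s = h 0).
  { apply const_of_zero. intros x. unfold h. eapply isd_val.
    apply isd_minus. apply isd_plus. apply isd_const. apply isd_scal.
    apply (isd_comp (fun y => RInt tb 0 y) (fun y => y + 1)).
    apply antider, Hs. eapply isd_val. apply isd_plus. apply isd_id. apply isd_const. reflexivity.
    apply isd_plus. apply isd_const. apply isd_scal. apply antider, Hs.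
    rewrite Hp. ring. }
  unfold h in E. rewrite Rplus_0_l, RInt_point in E. unfold zero in E; simpl in E. lra.
Qed.

Definition curve_props (gamma : R -> R * R) (a : R) (tb : R -> R) :=
 exists vt vx at_ ax : R -> R,
 (forall s, is_derive (fun y => fst (gamma y)) s (vt s)) /\
 (forall s, is_derive (fun y => snd (gamma y)) s (vx s)) /\
 (forall s, is_derive vt s (at_ s)) /\ (forall s, is_derive vx s (ax s)) /\
 (forall s, - vt s ^ 2 + vx s ^ 2 = a ^ 2) /\ (forall s, 0 < vx s) /\
 (forall s, (vx s * at_ s - vt s * ax s) / a = tb s * a ^ 2).

Lemma isd_opp (f : R -> R) (x a : R) : is_derive f x a -> is_derive (fun y => - f y) x (- a).
Proof. intros H. exact (is_derive_opp f x a H). Qed.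

Section C.
Variables (tb : R -> R) (a : R).
Hypothesis (Hs : sm tb) (Ha : 0 < a).

Definition thf th0 s := th0 + a * RInt tb 0 s.
Definition Ef th0 s := exp (thf th0 s).
Definition Eif th0 s := exp (- thf th0 s).
Definition uf th0 u0 s := u0 + a * RInt (Ef th0) 0 s.
Definition wf th0 w0 s := w0 - a * RInt (Eif th0) 0 s.
Definition gam th0 u0 w0 s := ((uf th0 u0 s + wf th0 w0 s) / 2, (uf th0 u0 s - wf th0 w0 s) / 2).

Lemma der_th th0 x : is_derive (thf th0) x (a * tb x).
Proof. eapply isd_val. apply isd_plus. apply isd_const. apply isd_scal. apply antider, Hs. ring. Qed.

Lemma der_E th0 x : is_derive (Ef th0) x (a * tb x * Ef th0 x).
Proof. unfold Ef. apply (isd_exp_comp (thf th0)), der_th. Qed.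

Lemma der_Ei th0 x : is_derive (Eif th0) x (- (a * tb x) * Eif th0 x).
Proof. unfold Eif. apply (isd_exp_comp (fun y => - thf th0 y)). eapply isd_val.
  apply isd_opp. apply der_th. ring. Qed.

Lemma sm_E th0 : sm (Ef th0).
Proof. apply sm_ode with (b := fun x => a * tb x). apply sm_scal, Hs. apply der_E. Qed.

Lemma sm_Ei th0 : sm (Eif th0).
Proof. apply sm_ode with (b := fun x => - (a * tb x)).
  apply sm_ext with (fun x => (-a) * tb x). intros; ring. apply sm_scal, Hs. apply der_Ei. Qed.

Lemma EEi th0 s : Ef th0 s * Eif th0 s = 1.
Proof. unfold Ef, Eif. rewrite <- exp_plus. replace (thf th0 s + - thf th0 s) with 0 by ring. apply exp_0. Qed.

Lemma E_pos th0 s : 0 < Ef th0 s.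
Proof. apply exp_pos. Qed.
Lemma Ei_pos th0 s : 0 < Eif th0 s.
Proof. apply exp_pos. Qed.

Lemma der_u th0 u0 x : is_derive (uf th0 u0) x (a * Ef th0 x).
Proof. eapply isd_val. apply isd_plus. apply isd_const. apply isd_scal. apply antider, sm_E. ring. Qed.

Lemma der_w th0 w0 x : is_derive (wf th0 w0) x (- (a * Eif th0 x)).
Proof. eapply isd_val. apply isd_minus. apply isd_const. apply isd_scal. apply antider, sm_Ei. ring. Qed.

Lemma sm_u th0 u0 : sm (uf th0 u0).
Proof. apply sm_antider with (fun x => a * Ef th0 x). apply sm_scal, sm_E. apply der_u. Qed.
Lemma sm_w th0 w0 : sm (wf th0 w0).
Proof. apply sm_antider with (fun x => (-a) * Eif th0 x). apply sm_scal, sm_Ei.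
  intros x; eapply isd_val. apply der_w. ring. Qed.

Lemma gam_smooth th0 u0 w0 : smooth_curve (gam th0 u0 w0).
Proof.
  split; apply sm_smooth1.
  apply sm_ext with (fun s => /2 * (uf th0 u0 s + wf th0 w0 s)). intros; simpl; field.
  apply sm_scal, sm_plus. apply sm_u. apply sm_w.
  apply sm_ext with (fun s => /2 * (uf th0 u0 s + (-1) * wf th0 w0 s)). intros; simpl; field.
  apply sm_scal, sm_plus. apply sm_u. apply sm_scal, sm_w.
Qed.

Lemma gam_props th0 u0 w0 : curve_props (gam th0 u0 w0) a tb.
Proof.
  exists (fun s => /2 * (a * Ef th0 s + - (a * Eif th0 s))).
  exists (fun s => /2 * (a * Ef th0 s + -1 * - (a * Eif th0 s))).
  exists (fun s => /2 * (a * (a * tb s * Ef th0 s) + - (a * (- (a * tb s) * Eif th0 s)))).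
  exists (fun s => /2 * (a * (a * tb s * Ef th0 s) + -1 * - (a * (- (a * tb s) * Eif th0 s)))).
  split; [|split; [|split; [|split; [|split; [|split]]]]].
  - intros s. apply is_derive_ext with (fun y => /2 * (uf th0 u0 y + wf th0 w0 y)).
    intros; simpl; field. apply isd_scal, isd_plus. apply der_u. apply der_w.
  - intros s. apply is_derive_ext with (fun y => /2 * (uf th0 u0 y + (-1) * wf th0 w0 y)).
    intros; simpl; field. apply isd_scal, isd_plus. apply der_u. apply isd_scal, der_w.
  - intros s. apply isd_scal, isd_plus. apply isd_scal, der_E.
    apply isd_opp. apply isd_scal, der_Ei.
  - intros s. apply isd_scal, isd_plus. apply isd_scal, der_E.
    apply (isd_scal (fun y => - (a * Eif th0 y)) s (-1)).
    apply isd_opp. apply isd_scal, der_Ei.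
  - intros s. pose proof (EEi th0 s). 
    transitivity (a ^ 2 * (Ef th0 s * Eif th0 s)); [field | rewrite H; ring].
  - intros s. pose proof (E_pos th0 s). pose proof (Ei_pos th0 s).
    assert (0 < a * Ef th0 s) by (apply Rmult_lt_0_compat; lra).
    assert (0 < a * Eif th0 s) by (apply Rmult_lt_0_compat; lra). lra.
  - intros s. pose proof (EEi th0 s).
    transitivity (tb s * a ^ 2 * (Ef th0 s * Eif th0 s)); [field; lra | rewrite H; ring].
Qed.

End C.

Lemma RInt_scalR (f : R -> R) a b c : ex_RInt f a b -> RInt (fun x => c * f x) a b = c * RInt f a b.
Proof. intros H. exact (RInt_scal f a b c H). Qed.

Lemma RInt_pt (f : R -> R) a : RInt f a a = 0.
Proof. exact (RInt_point a f). Qed.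

Section K.
Variables (tb : R -> R) (a : R).
Hypothesis (Hs : sm tb) (Hp : periodic1 tb) (Ha : 0 < a).

Lemma th_shift th0 s : thf tb a th0 (s + 1) = thf tb a th0 s + a * RInt tb 0 1.
Proof. unfold thf. apply theta_shift; auto. Qed.

Lemma kasner_ok : RInt tb 0 1 <> 0 ->
  exists gamma, kasner_closed_embedded_curve (a * RInt tb 0 1) gamma /\ curve_props gamma a tb.
Proof.
  intros HT. set (P := a * RInt tb 0 1).
  assert (HP : P <> 0) by (unfold P; intros E; apply Rmult_integral in E; destruct E; lra).
  set (I := RInt (Ef tb a 0) 0 1). set (J := RInt (Eif tb a 0) 0 1).
  assert (He1 : exp P <> 1).
  { intros E. rewrite <- exp_0 in E. apply exp_inv in E. auto. }
  assert (He2 : exp (- P) <> 1).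
  { intros E. rewrite <- exp_0 in E. apply exp_inv in E. lra. }
  set (u0 := a * I / (exp P - 1)). set (w0 := - (a * J) / (exp (- P) - 1)).
  set (u := uf tb a 0 u0). set (w := wf tb a 0 w0).
  assert (ES : forall s, Ef tb a 0 (s + 1) = exp P * Ef tb a 0 s).
  { intros s. unfold Ef. rewrite th_shift, exp_plus. fold P. ring. }
  assert (EiS : forall s, Eif tb a 0 (s + 1) = exp (- P) * Eif tb a 0 s).
  { intros s. unfold Eif. rewrite th_shift, <- exp_plus. fold P. f_equal; ring. }
  assert (uS : forall s, u (s + 1) = exp P * u s).
  { intros s. set (h := fun s => u (s + 1) - exp P * u s).
    assert (E : h s = h 0).
    { apply const_of_zero. intros x. unfold h. eapply isd_val.
      apply isd_minus. apply (isd_comp u (fun y => y + 1)). apply der_u; auto.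
      eapply isd_val. apply isd_plus. apply isd_id. apply isd_const. reflexivity.
      apply isd_scal. apply der_u; auto. rewrite ES. ring. }
    assert (h0 : h 0 = 0).
    { unfold h, u, uf. replace (0 + 1) with 1 by ring. rewrite RInt_pt. fold I.
      unfold u0; field. intro; apply He1; lra. }
    unfold h in E, h0. lra. }
  assert (wS : forall s, w (s + 1) = exp (- P) * w s).
  { intros s. set (h := fun s => w (s + 1) - exp (- P) * w s).
    assert (E : h s = h 0).
    { apply const_of_zero. intros x. unfold h. eapply isd_val.
      apply isd_minus. apply (isd_comp w (fun y => y + 1)). apply der_w; auto.
      eapply isd_val. apply isd_plus. apply isd_id. apply isd_const. reflexivity.
      apply isd_scal. apply der_w; auto. rewrite EiS. ring. }
    assert (h0 : h 0 = 0).
    { unfold h, w, wf. replace (0 + 1) with 1 by ring. rewrite RInt_pt. fold J.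
      unfold w0; field. intro; apply He2; lra. }
    unfold h in E, h0. lra. }
  assert (uI : forall x y, x < y -> u x < u y).
  { apply strict_incr with (fun x => a * Ef tb a 0 x). intros; apply der_u; auto.
    intros; apply Rmult_lt_0_compat; auto; apply E_pos. }
  assert (wD : forall x y, x < y -> - w x < - w y).
  { apply strict_incr with (fun x => a * Eif tb a 0 x). intros x.
    eapply isd_val. apply isd_opp. apply der_w; auto. ring.
    intros; apply Rmult_lt_0_compat; auto; apply Ei_pos. }
  exists (gam tb a 0 u0 w0). split; [|apply gam_props; auto].
  split; [apply gam_smooth; auto|]. split; [|split].
  - intros s. fold P. unfold gam. fold u w. simpl.
    pose proof (uI s (s + 1) ltac:(lra)) as U1. pose proof (wD s (s + 1) ltac:(lra)) as W1.
    rewrite uS in U1. rewrite wS in W1.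
    destruct (Rlt_dec 0 P) as [Pp|Pn].
    + left. split; auto. unfold in_Iplus; simpl.
      assert (1 < exp P) by (rewrite <- exp_0; apply exp_increasing; auto).
      assert (exp (- P) < 1) by (rewrite <- exp_0; apply exp_increasing; lra).
      assert (0 < exp (- P)) by apply exp_pos.
      assert (0 < u s) by nra. assert (0 < w s) by nra.
      apply Rabs_def1; lra.
    + right. split; [lra|]. unfold in_Iminus; simpl.
      assert (exp P < 1) by (rewrite <- exp_0; apply exp_increasing; lra).
      assert (1 < exp (- P)) by (rewrite <- exp_0; apply exp_increasing; lra).
      assert (0 < exp P) by apply exp_pos.
      assert (u s < 0) by nra. assert (w s < 0) by nra.
      apply Rabs_def1; lra.
  - exists 1%Z. intros s. fold P. unfold gam. fold u w. unfold boost; simpl.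
    rewrite uS, wS. change (IZR 1) with 1. rewrite Rmult_1_l. unfold cosh, sinh.
    f_equal; field.
  - intros s s' k H. fold P in H. unfold gam, boost in H. fold u w in H.
    pose proof (f_equal fst H) as H1. pose proof (f_equal snd H) as H2. simpl in H1, H2.
    assert (Hu : u s = exp (IZR k * P) * u s').
    { replace (u s) with ((u s + w s) / 2 + (u s - w s) / 2) by field.
      rewrite H1, H2. unfold cosh, sinh. field. }
    rewrite <- (iter_mult u P uS k s') in Hu.
    exists k. apply (incr_inj u uI _ _ Hu).
Qed.

Lemma cyl_ok : RInt tb 0 1 = 0 ->
  exists L, 0 < L /\ exists gamma, cyl_closed_embedded_curve L gamma /\ curve_props gamma a tb.
Proof.
  intros HT.
  set (A := RInt (Ef tb a 0) 0 1). set (B := RInt (Eif tb a 0) 0 1).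
  assert (HA : 0 < A).
  { pose proof (strict_incr (fun s => RInt (Ef tb a 0) 0 s) (Ef tb a 0)
      (fun x => antider _ 0 x (sm_E tb a Hs 0)) (E_pos tb a 0) 0 1 ltac:(lra)) as X.
    simpl in X. rewrite RInt_pt in X. exact X. }
  assert (HB : 0 < B).
  { pose proof (strict_incr (fun s => RInt (Eif tb a 0) 0 s) (Eif tb a 0)
      (fun x => antider _ 0 x (sm_Ei tb a Hs 0)) (Ei_pos tb a 0) 0 1 ltac:(lra)) as X.
    simpl in X. rewrite RInt_pt in X. exact X. }
  set (th0 := (ln B - ln A) / 2).
  assert (Ee : exp th0 * exp th0 = B / A).
  { rewrite <- exp_plus. replace (th0 + th0) with (ln B + - ln A) by (unfold th0; field).
    rewrite exp_plus, exp_Ropp, !exp_ln by auto. field; lra. }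
  assert (EA : RInt (Ef tb a th0) 0 1 = exp th0 * A).
  { unfold A. rewrite <- RInt_scalR. apply RInt_ext. intros x _. unfold Ef, thf.
    rewrite <- exp_plus. f_equal; ring. apply exRI, sm_E; auto. }
  assert (EB : RInt (Eif tb a th0) 0 1 = exp (- th0) * B).
  { unfold B. rewrite <- RInt_scalR. apply RInt_ext. intros x _. unfold Eif, thf.
    rewrite <- exp_plus. f_equal; ring. apply exRI, sm_Ei; auto. }
  set (u := uf tb a th0 0). set (w := wf tb a th0 0).
  set (u1 := a * (exp th0 * A)). set (w1 := - (a * (exp (- th0) * B))).
  assert (Hsum : u1 + w1 = 0).
  { unfold u1, w1. rewrite exp_Ropp. assert (0 < exp th0) by apply exp_pos.
    assert (exp th0 * exp th0 * A = B) by (rewrite Ee; field; lra).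
    rewrite <- H0. field; lra. }
  assert (thS : forall s, thf tb a th0 (s + 1) = thf tb a th0 s).
  { intros s. rewrite th_shift, HT. ring. }
  assert (uS : forall s, u (s + 1) = u s + u1).
  { intros s. set (h := fun s => u (s + 1) - u s).
    assert (E : h s = h 0).
    { apply const_of_zero. intros x. unfold h. eapply isd_val.
      apply isd_minus. apply (isd_comp u (fun y => y + 1)). apply der_u; auto.
      eapply isd_val. apply isd_plus. apply isd_id. apply isd_const. reflexivity.
      apply der_u; auto. unfold Ef. rewrite thS. ring. }
    assert (h0 : h 0 = u1).
    { unfold h, u, uf. replace (0 + 1) with 1 by ring. rewrite RInt_pt, EA. unfold u1; ring. }
    unfold h in E, h0. lra. }
  assert (wS : forall s, w (s + 1) = w s + w1).
  { intros s. set (h := fun s => w (s + 1) - w s).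
    assert (E : h s = h 0).
    { apply const_of_zero. intros x. unfold h. eapply isd_val.
      apply isd_minus. apply (isd_comp w (fun y => y + 1)). apply der_w; auto.
      eapply isd_val. apply isd_plus. apply isd_id. apply isd_const. reflexivity.
      apply der_w; auto. unfold Eif. rewrite thS. ring. }
    assert (h0 : h 0 = w1).
    { unfold h, w, wf. replace (0 + 1) with 1 by ring. rewrite RInt_pt, EB. unfold w1; ring. }
    unfold h in E, h0. lra. }
  assert (Hu1 : 0 < u1).
  { unfold u1. apply Rmult_lt_0_compat; auto. apply Rmult_lt_0_compat; auto. apply exp_pos. }
  assert (Hw1 : w1 < 0).
  { unfold w1. assert (0 < a * (exp (- th0) * B)); [|lra].
    apply Rmult_lt_0_compat; auto. apply Rmult_lt_0_compat; auto. apply exp_pos. }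
  set (L := (u1 - w1) / 2).
  set (x := fun s => (u s - w s) / 2).
  assert (xS : forall s, x (s + 1) = x s + L).
  { intros s. unfold x, L. rewrite uS, wS. field. }
  assert (xI : forall p q, p < q -> x p < x q).
  { apply strict_incr with (fun s => / 2 * (a * Ef tb a th0 s + a * Eif tb a th0 s)).
    intros s. apply (is_derive_ext (fun y => / 2 * (u y + (-1) * w y))).
    intros t; unfold x. assert (Z : forall p q : R, / 2 * (p + -1 * q) = (p - q) / 2) by (intros; field).
    apply Z. apply isd_scal. eapply isd_val. apply isd_plus. apply der_u; auto.
    apply isd_scal. apply der_w; auto. ring.
    intros s. pose proof (E_pos tb a th0 s). pose proof (Ei_pos tb a th0 s).
    assert (0 < a * Ef tb a th0 s) by (apply Rmult_lt_0_compat; lra).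
    assert (0 < a * Eif tb a th0 s) by (apply Rmult_lt_0_compat; lra). lra. }
  exists L. split. unfold L; lra.
  exists (gam tb a th0 0 0). split; [|apply gam_props; auto].
  split; [apply gam_smooth; auto|]. split.
  - exists 1%Z. intros s. unfold gam. fold u w. unfold translx; simpl.
    rewrite uS, wS. change (IZR 1) with 1. f_equal; unfold L; lra.
  - intros s s' k H. unfold gam, translx in H. fold u w in H.
    pose proof (f_equal snd H) as H2. simpl in H2.
    assert (Hx : x s = x s' + IZR k * L) by (unfold x; exact H2).
    rewrite <- (iter_add x L xS k s') in Hx.
    exists k. apply (incr_inj x xI _ _ Hx).
Qed.

End K.

Lemma sumR_ext f g m : (forall j, f j = g j) -> sumR f m = sumR g m.
Proof. intros H; induction m; simpl; auto. rewrite IHm, H; auto. Qed.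

Lemma sumR_zero f m : (forall j, f j = 0) -> sumR f m = 0.
Proof. intros H; induction m; simpl; auto. rewrite IHm, H; ring. Qed.

Lemma sumR_delta (c : nat -> R) i j m :
  sumR (fun k => c k * (if Nat.eqb k i then 1 else 0) * (if Nat.eqb k j then 1 else 0)) m
  = if andb (Nat.ltb i m) (Nat.eqb i j) then c i else 0.
Proof.
  induction m. reflexivity.
  simpl sumR. rewrite IHm.
  destruct (Nat.ltb_spec i m); destruct (Nat.ltb_spec i (S m)); destruct (Nat.eqb_spec i j);
  destruct (Nat.eqb_spec m i); destruct (Nat.eqb_spec m j); simpl; subst; try lia; try ring.
Qed.

Section I.
Variables (gamma : R -> R * R) (vt vx at_ ax : R -> R).
Hypothesis (Hvt : forall s, is_derive (fun y => fst (gamma y)) s (vt s))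
  (Hvx : forall s, is_derive (fun y => snd (gamma y)) s (vx s))
  (Hat : forall s, is_derive vt s (at_ s)) (Hax : forall s, is_derive vx s (ax s)).

Let F := simple_product_embedding gamma.

Lemma pd0 s a : pderiv F 0 s a = match a with O => vt (s 0%nat) | S O => vx (s 0%nat) | _ => 0 end.
Proof.
  destruct a as [|[|a]]; unfold pderiv, F, simple_product_embedding, upd; simpl.
  apply is_derive_unique, Hvt. apply is_derive_unique, Hvx. apply Derive_const.
Qed.

Lemma pdS i s a : pderiv F (S i) s a =
  match a with O => 0 | S O => 0 | S (S b) => if Nat.eqb b i then 1 else 0 end.
Proof.
  destruct a as [|[|a]]; unfold pderiv, F, simple_product_embedding, upd; simpl.
  apply Derive_const. apply Derive_const.
  destruct (Nat.eqb a i). apply is_derive_unique, isd_id. apply Derive_const.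
Qed.

Lemma pp0 i j s : pderiv (pderiv F j) i s 0%nat =
  if andb (Nat.eqb i 0) (Nat.eqb j 0) then at_ (s 0%nat) else 0.
Proof.
  change (pderiv (pderiv F j) i s 0%nat) with (Derive (fun t => pderiv F j (upd s i t) 0%nat) (s i)).
  destruct j as [|j].
  - rewrite (Derive_ext _ (fun t => vt (upd s i t 0%nat))) by (intros; apply pd0).
    destruct i as [|i]; simpl.
    + unfold upd; simpl. apply is_derive_unique, Hat.
    + unfold upd; simpl. apply Derive_const.
  - rewrite (Derive_ext _ (fun t => 0)) by (intros; apply pdS).
    rewrite Derive_const. destruct i; reflexivity.
Qed.

Lemma pp1 i j s : pderiv (pderiv F j) i s 1%nat =
  if andb (Nat.eqb i 0) (Nat.eqb j 0) then ax (s 0%nat) else 0.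
Proof.
  change (pderiv (pderiv F j) i s 1%nat) with (Derive (fun t => pderiv F j (upd s i t) 1%nat) (s i)).
  destruct j as [|j].
  - rewrite (Derive_ext _ (fun t => vx (upd s i t 0%nat))) by (intros; apply pd0).
    destruct i as [|i]; simpl.
    + unfold upd; simpl. apply is_derive_unique, Hax.
    + unfold upd; simpl. apply Derive_const.
  - rewrite (Derive_ext _ (fun t => 0)) by (intros; apply pdS).
    rewrite Derive_const. destruct i; reflexivity.
Qed.

End I.

Lemma induces_curve (n : nat) (rl : nat -> R) (tb : R -> R) (gamma : R -> R * R) :
  (0 < n)%nat -> (forall k, (k < n)%nat -> 0 < rl k) -> curve_props gamma (rl 0%nat) tb ->
  induces n (fun j => rl (S j)) (simple_product_embedding gamma) (fun i j s => g_torus rl i j)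
   (fun i j s => if andb (Nat.eqb i 0) (Nat.eqb j 0) then tb (s 0%nat) * (rl 0%nat) ^ 2 else 0).
Proof.
  intros Hn Hrl [vt [vx [at_ [ax [Hvt [Hvx [Hat [Hax [Hm [Hpos HK]]]]]]]]]].
  assert (Ha : 0 < rl 0%nat) by (apply Hrl; lia).
  intros s. split.
  - intros i j Hi Hj. unfold induced_metric, prod_metric, g_torus.
    destruct i as [|i]; destruct j as [|j].
    + rewrite !(pd0 gamma vt vx Hvt Hvx).
      rewrite sumR_zero by (intros k; rewrite !(pd0 gamma vt vx Hvt Hvx); simpl; ring).
      simpl Nat.eqb. cbv iota. pose proof (Hm (s 0%nat)). nra.
    + rewrite (pd0 gamma vt vx Hvt Hvx), (pd0 gamma vt vx Hvt Hvx), !(pdS gamma).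
      rewrite sumR_zero by (intros k; rewrite (pd0 gamma vt vx Hvt Hvx); simpl; ring).
      simpl Nat.eqb. cbv iota. ring.
    + rewrite (pd0 gamma vt vx Hvt Hvx), (pd0 gamma vt vx Hvt Hvx), !(pdS gamma).
      rewrite sumR_zero by (intros k; rewrite (pd0 gamma vt vx Hvt Hvx); simpl; ring).
      simpl Nat.eqb. cbv iota. ring.
    + rewrite !(pdS gamma).
      rewrite (sumR_ext _ (fun k => (rl (S k)) ^ 2 * (if Nat.eqb k i then 1 else 0) * (if Nat.eqb k j then 1 else 0)))
        by (intros k; rewrite !(pdS gamma); reflexivity).
      rewrite sumR_delta.
      replace (Nat.ltb i (n - 1)) with true by (symmetry; apply Nat.ltb_lt; lia).
      simpl Nat.eqb. simpl andb. destruct (Nat.eqb_spec i j); subst; ring.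
  - set (nu := fun a : nat => match a with O => vx (s 0%nat) / rl 0%nat | S O => vt (s 0%nat) / rl 0%nat | _ => 0 end).
    exists nu. split; [split; [|split]|].
    + unfold prod_metric. rewrite sumR_zero by (intros; simpl; ring). simpl.
      pose proof (Hm (s 0%nat)). field_simplify; [|lra].
      replace (rl 0%nat ^ 2) with (- vt (s 0%nat) ^ 2 + vx (s 0%nat) ^ 2) by auto. field.
      intro Z. rewrite Z in H. nra.
    + simpl. apply Rdiv_lt_0_compat; auto.
    + intros i Hi. unfold prod_metric. rewrite sumR_zero by (intros; simpl; ring).
      destruct i as [|i].
      * rewrite !(pd0 gamma vt vx Hvt Hvx). simpl. field. lra.
      * rewrite !(pdS gamma). simpl. ring.
    + intros i j Hi Hj. unfold second_fundamental_form, prod_metric.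
      rewrite sumR_zero by (intros; simpl; ring).
      rewrite (pp0 gamma vt vx at_ Hvt Hvx Hat), (pp1 gamma vt vx ax Hvt Hvx Hax).
      destruct (andb (Nat.eqb i 0) (Nat.eqb j 0)).
      * rewrite <- HK. simpl. field. lra.
      * ring.
Qed.

Lemma iint_dep0 (F : vec -> R) (G : R -> R) : (forall s, F s = G (s 0%nat)) ->
  forall k s, (1 <= k)%nat -> iint k F s = RInt G 0 1.
Proof.
  intros HF k. induction k; intros s Hk. lia.
  destruct k.
  - simpl. apply RInt_ext. intros x _. rewrite HF. reflexivity.
  - change (iint (S (S k)) F s) with (RInt (fun t => iint (S k) F (upd s (S k) t)) 0 1).
    rewrite (RInt_ext _ (fun _ => RInt G 0 1)) by (intros; apply IHk; lia).
    rewrite RInt_const. change (scal (1 - 0) (RInt G 0 1)) with ((1 - 0) * RInt G 0 1). ring.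
Qed.

Lemma prodR_pos f m : (forall k, (k < m)%nat -> 0 < f k) -> 0 < prodR f m.
Proof. induction m; intros H; simpl. lra. apply Rmult_lt_0_compat. apply IHm; intros; apply H; lia. apply H; lia. Qed.

Theorem proposition7p2
  (n : nat) (hn : (3 <= n)%nat)
  (l : nat -> R) (hl : forall k, (k < n)%nat -> 0 < l k)
  (xi N : R -> R)
  (hxi : smooth1 xi) (hxip : periodic1 xi)
  (hN : smooth1 N) (hNp : periodic1 N) (hNpos : forall x, 0 < N x)
  (hint : torus_integral n l (fun s => xi (s 0%nat) * N (s 0%nat)) = 0)
  (mu tau_star c : R)
  (hcase : (mu <> 0 /\ tau_star <> 0 /\ 0 < mu * tau_star /\
            c = Rpower (mu / tau_star) (/ q_exp n))
           \/ (mu = 0 /\ tau_star = 0 /\ 0 < c)) :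
  let q := q_exp n in
  let r := Rpower c ((q - 2) / 2) in
  let tau_bar := fun s1 : R => tau_star + Rpower c (- 2 * q) * xi s1 in
  let rl := fun k : nat => r * l k in
  let gbar := fun (i j : nat) (s : vec) => g_torus rl i j in
  let Kbar := fun (i j : nat) (s : vec) =>
      if andb (Nat.eqb i 0) (Nat.eqb j 0)
      then tau_bar (s 0%nat) * (rl 0%nat) ^ 2 else 0 in
  let tau_circ := torus_integral n rl (fun s => tau_bar (s 0%nat))
                  / torus_integral n rl (fun _ => 1) in
  let lhat := fun j : nat => rl (S j) in
  (tau_circ <> 0 ->
     exists gamma : R -> R * R,
       kasner_closed_embedded_curve (rl 0%nat * tau_circ) gamma /\
       induces n lhat (simple_product_embedding gamma) gbar Kbar) /\
  (tau_circ = 0 ->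
     exists L : R, 0 < L /\
     exists gamma : R -> R * R,
       cyl_closed_embedded_curve L gamma /\
       induces n lhat (simple_product_embedding gamma) gbar Kbar).
Proof.
  intros q r tau_bar rl gbar Kbar tau_circ lhat.
  assert (Hr : 0 < r) by (unfold r, Rpower; apply exp_pos).
  assert (Hrl : forall k, (k < n)%nat -> 0 < rl k) by (intros; unfold rl; apply Rmult_lt_0_compat; auto).
  assert (Ha : 0 < rl 0%nat) by (apply Hrl; lia).
  assert (Hsm : sm tau_bar).
  { apply (sm_plus (fun _ => tau_star) (fun s1 => Rpower c (- 2 * q) * xi s1)).
    apply sm_const. apply (sm_scal _ xi). apply smooth1_sm, hxi. }
  assert (Hper : periodic1 tau_bar) by (intros x; unfold tau_bar; rewrite hxip; reflexivity).
  set (P := prodR rl n).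
  assert (HP : 0 < P) by (apply prodR_pos; auto).
  assert (Htc : tau_circ = RInt tau_bar 0 1).
  { unfold tau_circ, torus_integral. fold P.
    rewrite (iint_dep0 _ (fun y => P * tau_bar y)) by (intros; simpl; ring || lia).
    rewrite (iint_dep0 _ (fun y => P)) by (intros; simpl; ring || lia).
    rewrite RInt_scalR by (apply exRI; auto).
    rewrite RInt_const. change (scal (1 - 0) P) with ((1 - 0) * P). field. lra. }
  assert (Hind : forall g, curve_props g (rl 0%nat) tau_bar ->
     induces n lhat (simple_product_embedding g) gbar Kbar).
  { intros g Hg. apply (induces_curve n rl tau_bar g); auto. lia. }
  split.
  - intros Hne. rewrite Htc in Hne |- *.
    destruct (kasner_ok tau_bar (rl 0%nat) Hsm Hper Ha Hne) as [g [Hk Hc]].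
    exists g. split; auto.
  - intros Hz. rewrite Htc in Hz.
    destruct (cyl_ok tau_bar (rl 0%nat) Hsm Hper Ha Hz) as [L [HL [g [Hg Hc]]]].
    exists L. split; auto. exists g. split; auto.
Qed.
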